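(* Let $R$ be an associative ring with identity. The following are equivalent: (1) $R$ is NJ-symmetric; (2) for all $a,b,c\in R$, $abc\in N(R)$ implies $acb\in J(R)$; (3) for all $a,b,c\in R$, $abc\in N(R)$ implies $cba\in J(R)$.
   Context: $N(R)$ is the set of nilpotent elements of $R$ and $J(R)$ is the Jacobson radical of $R$. A ring $R$ is called NJ-symmetric if for all $a,b,c\in R$, $abc\in N(R)$ implies $bac\in J(R)$. *)

(* Defs.v *)
From HB Require Import structures.
From mathcomp Require Import all_boot all_algebra.
Set Implicit Arguments. Unset Strict Implicit. Unset Printing Implicit Defensive.
Import GRing.Theory.
Local Open Scope ring_scope.

Definition nilpotent_el (R : pzRingType) (x : R) : Prop := exists n : nat, x ^+ n = 0.

Definition left_ideal (R : pzRingType) (I : R -> Prop) : Prop :=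
  [/\ I 0, (forall x y, I x -> I y -> I (x - y)) & (forall r x, I x -> I (r * x))].

Definition maximal_left_ideal (R : pzRingType) (I : R -> Prop) : Prop :=
  [/\ left_ideal I, ~ I 1 &
      forall K : R -> Prop, left_ideal K -> ~ K 1 -> (forall x, I x -> K x) ->
        forall x, K x -> I x].

Definition jacobson (R : pzRingType) (x : R) : Prop :=
  forall I : R -> Prop, maximal_left_ideal I -> I x.

Definition NJ_symmetric (R : pzRingType) : Prop :=
  forall a b c : R, nilpotent_el (a * b * c) -> jacobson (b * a * c).

(* Main.v *)
Require Import Defs.
From mathcomp Require Import all_boot all_algebra.
Local Open Scope ring_scope.
Import GRing.Theory.

Lemma rot_expr (R : pzRingType) (x y : R) (n : nat) :
  (y * x) ^+ n.+1 = y * (x * y) ^+ n * x.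
Proof.
elim: n => [|n IH]; first by rewrite expr1 expr0 mulr1.
by rewrite exprS IH exprS !mulrA.
Qed.

Lemma nil_rot (R : pzRingType) (x y : R) :
  nilpotent_el (x * y) -> nilpotent_el (y * x).
Proof.
by case=> n Hn; exists n.+1; rewrite rot_expr Hn mulr0 mul0r.
Qed.

Theorem proposition2p2 (R : pzRingType) :
  [/\ (NJ_symmetric R <->
        (forall a b c : R, nilpotent_el (a * b * c) -> jacobson (a * c * b))),
      (NJ_symmetric R <->
        (forall a b c : R, nilpotent_el (a * b * c) -> jacobson (c * b * a)))
    & ((forall a b c : R, nilpotent_el (a * b * c) -> jacobson (a * c * b)) <->
        (forall a b c : R, nilpotent_el (a * b * c) -> jacobson (c * b * a)))].
Proof.
have r1 : forall a b c : R, nilpotent_el (a * b * c) -> nilpotent_el (c * a * b).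
  by move=> a b c /nil_rot; rewrite mulrA.
have r2 : forall a b c : R, nilpotent_el (a * b * c) -> nilpotent_el (b * c * a).
  by move=> a b c H; exact: (r1 _ _ _ (r1 _ _ _ H)).
rewrite /NJ_symmetric.
split; split=> H a b c Habc.
- exact: H _ _ _ (r1 _ _ _ Habc).
- exact: H _ _ _ (r2 _ _ _ Habc).
- exact: H _ _ _ (r2 _ _ _ Habc).
- exact: H _ _ _ (r1 _ _ _ Habc).
- exact: H _ _ _ (r1 _ _ _ Habc).
- exact: H _ _ _ (r2 _ _ _ Habc).
Qed.
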